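(* If $W$ is a non-empty null-homotopic closed walk, then at least two segments of $W$ are retractable.
   Context: A closed walk in a simple graph is a cyclic sequence $u_1,\ldots,u_m$ of vertices with $u_iu_{i+1}$ an edge for $i<m$ and $u_mu_1$ an edge. A segment is a cyclically consecutive triple $u_iu_{i+1}u_{i+2}$ (indices mod $m$); it is retractable if $u_i=u_{i+2}$, and deleting $u_{i+1}$ and $u_{i+2}$ is a one-step retraction (for a closed walk of length two the result is the empty walk). The topological retract is obtained by performing one-step retractions as long as possible (it is unique). A closed walk is null-homotopic if its topological retract is empty. *)

(* Defs.v *)
From mathcomp Require Import all_boot.
Set Implicit Arguments. Unset Strict Implicit. Unset Printing Implicit Defensive.

(* A simple graph: vertex type T : finType, adjacency e : rel T, symmetric and
   irreflexive. *)
Definition closed_walk (T : eqType) (e : rel T) (w : seq T) : bool := cycle e w.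

(* The segment starting at position i (0 <= i < size w) is the cyclic triple
   w_i w_{i+1} w_{i+2} (indices mod m); it is retractable iff w_i = w_{i+2}. *)
Definition retractable (T : eqType) (w : seq T) (i : nat) : bool :=
  match w with
  | [::] => false
  | x :: _ => nth x w (i %% size w) == nth x w ((i + 2) %% size w)
  end.

(* The result
   is a cyclic sequence; we return it rotated to start at w_i. *)
Definition retract1 (T : eqType) (w : seq T) (i : nat) : seq T :=
  if size w <= 2 then [::] else
  match rot i w with
  | a :: _ :: _ :: r => a :: r
  | _ => [::]
  end.

Definition retract_step (T : eqType) (w : seq T) : seq T :=
  let i := find (retractable w) (iota 0 (size w)) in
  if i < size w then retract1 w i else w.

(* Topological retract: perform one-step retractions as long as possible.
   Each step decreases the length, so size w iterations suffice. *)
Definition topological_retract (T : eqType) (w : seq T) : seq T :=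
  iter (size w) (@retract_step T) w.

Definition null_homotopic (T : eqType) (w : seq T) : bool :=
  topological_retract w == [::].

Definition num_retractable (T : eqType) (w : seq T) : nat :=
  count (retractable w) (iota 0 (size w)).

(* Main.v *)
Require Import Defs.
From mathcomp Require Import all_boot.
From mathcomp Require Import zify.

Section Aux.
Variable T : eqType.

Lemma retrE (x0 : T) (w : seq T) i : 0 < size w ->
  retractable w i = (nth x0 w (i %% size w) == nth x0 w ((i + 2) %% size w)).
Proof.
case: w => [|x w] //= _.
rewrite (set_nth_default x0 x) ?ltn_pmod //.
by rewrite (@set_nth_default _ _ x0 x ((i+2) %% (size w).+1)) ?ltn_pmod.
Qed.

Lemma nth_rot (x0 : T) (s : seq T) k j : k <= size s -> j < size s ->
  nth x0 (rot k s) j = nth x0 s ((k + j) %% size s).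
Proof.
move=> hk hj; rewrite /rot nth_cat size_drop.
case: ifP => h.
  by rewrite nth_drop modn_small //; lia.
rewrite nth_take; last by lia.
have -> : k + j = size s + (j - (size s - k)) by lia.
by rewrite modnDl modn_small //; lia.
Qed.

Lemma retr_rot (w : seq T) k j : k < size w ->
  retractable (rot k w) j = retractable w (k + j).
Proof.
move=> hk; have h0 : 0 < size w by lia.
case: w hk h0 => [|x w'] // hk h0.
set w := x :: w'.
rewrite (retrE x); last by rewrite size_rot.
rewrite (retrE x) // size_rot.
rewrite !nth_rot ?ltn_pmod ?(ltnW hk) //.
by rewrite !modnDmr addnA.
Qed.

Lemma retr_per (w : seq T) j : retractable w (size w + j) = retractable w j.
Proof.
case: w => [|x w'] //.
rewrite !(retrE x) // -addnA !modnDl //.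
Qed.

Lemma count_rot (w : seq T) k : k < size w ->
  num_retractable (rot k w) = num_retractable w.
Proof.
move=> hk; rewrite /num_retractable size_rot.
rewrite (eq_count (a2 := fun j => retractable w (k + j))); last first.
  by move=> j; rewrite retr_rot.
rewrite -(count_map (addn k) (retractable w)) -iotaDl addn0.
have e1 : iota k (size w) = iota k (size w - k) ++ iota (size w) k.
  by rewrite -{1}(subnK (ltnW hk)) iotaD subnKC // ltnW.
have e2 : iota 0 (size w) = iota 0 k ++ iota k (size w - k).
  by rewrite -{1}(subnKC (ltnW hk)) iotaD.
rewrite e1 e2 !count_cat addnC; congr (_ + _).
rewrite -{1}[size w]addn0 iotaDl count_map; apply: eq_count => j /=.
by rewrite retr_per.
Qed.

Lemma nth_spur (a b : T) r k : k <= size r + 1 ->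
  nth a (a :: b :: a :: r) ((2 + k) %% (size r + 3)) =
  nth a (a :: r) (k %% (size r + 1)).
Proof.
move=> hk; case: (ltnP k (size r + 1)) => h.
  by rewrite !modn_small //; lia.
have -> : k = size r + 1 by lia.
have -> : 2 + (size r + 1) = size r + 3 by lia.
by rewrite !modnn.
Qed.

Lemma spur_count (a b : T) r :
  2 <= num_retractable (a :: r) -> 2 <= num_retractable (a :: b :: a :: r).
Proof.
rewrite /num_retractable.
have e1 : iota 0 (size (a :: r)) = iota 0 (size r) ++ [:: size r].
  have -> : size (a :: r) = size r + 1 by rewrite /= addn1.
  by rewrite iotaD.
have e2 : iota 0 (size (a :: b :: a :: r)) =
    [:: 0; 1] ++ iota 2 (size r) ++ [:: 2 + size r].
  have -> : size (a :: b :: a :: r) = 2 + (size r + 1) by rewrite /= addn1.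
  by rewrite !iotaD.
rewrite e1 e2 !count_cat.
set p := retractable (a :: b :: a :: r).
set q := retractable (a :: r).
have hp0 : p 0.
  rewrite /p (retrE a) //= modn_small // modn_small //.
have hsub : count q (iota 0 (size r)) <= count p (iota 2 (size r)).
  rewrite -[2]addn0 iotaDl count_map.
  rewrite (@eq_in_count _ q (fun j => q j && (j < size r))); last first.
    move=> j; rewrite mem_iota add0n => /andP [_ hj]; by rewrite hj andbT.
  apply: sub_count => j /andP [hq hj] /=.
  move: hq; rewrite /q /p (retrE a) // (retrE a) //.
  have -> : size (a :: r) = size r + 1 by rewrite /= addn1.
  have -> : size (a :: b :: a :: r) = size r + 3 by rewrite /= addn3.
  rewrite nth_spur; last by lia.
  rewrite -addnA nth_spur //; lia.
have h1 : 1 <= count p [:: 0; 1] by rewrite /= hp0.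
have h2 : count q [:: size r] <= 1 by rewrite /=; case: (q _).
lia.
Qed.

End Aux.

Lemma iter_fix (T : Type) (f : T -> T) x k : f x = x -> iter k f x = x.
Proof. by move=> h; elim: k => //= k ->. Qed.

Lemma main_aux (T : eqType) (e : rel T) (e_irr : irreflexive e) n :
  forall w : seq T, size w <= n -> cycle e w -> w != [::] ->
  (exists k, iter k (@retract_step T) w = [::]) -> 2 <= num_retractable w.
Proof.
elim: n => [|n IH] w.
  by rewrite leqn0 => /nilP ->.
move=> hs hc hne [k hk].
case: w hs hc hne hk => [|x [|y [|z r']]] // hs hc hne hk.
- by move: hc; rewrite /= e_irr.
- by rewrite /num_retractable /retractable /= !eqxx.
set w := [:: x, y, z & r'] in hs hc hne hk *.
set m := size w.
have hex : has (retractable w) (iota 0 m).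
  apply/negPn/negP => hn.
  have hf : retract_step w = w.
    by move: hn; rewrite /retract_step has_find size_iota => /negbTE ->.
  by move: hk; rewrite iter_fix.
set i := find (retractable w) (iota 0 m).
have hi : i < m by rewrite /i -{2}(size_iota 0 m) -has_find.
have hr : retractable w i.
  by have := nth_find 0 hex; rewrite nth_iota.
have hstep : retract_step w = retract1 w i by rewrite /retract_step -/m -/i hi.
have hsz : size (rot i w) = size r' + 3 by rewrite size_rot /= addn3.
move: hstep hsz; rewrite /retract1 /=.
have <- := @count_rot _ w i hi.
have := rot_cycle i e w; rewrite hc.
have := @retr_rot _ w i 0 hi; rewrite addn0 hr.
case: (rot i w) => [|a [|b [|c r]]] //= hr0 hcy hstep hsz; try lia.
have hac : a = c.
  move: hr0.
  by move/eqP.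
subst c.
apply: spur_count.
move: hcy => /andP [_ /andP [_ hcy]].
case: k hk => [|k]; first by move=> /= h; move: hne; rewrite h.
rewrite iterSr hstep => hk.
apply: IH => //.
  by move: hsz hs; rewrite /m /=; lia.
by exists k.
Qed.

Theorem mainTheorem13 (T : finType) (e : rel T)
  (e_sym : symmetric e) (e_irr : irreflexive e) (w : seq T) :
  closed_walk e w -> w != [::] -> null_homotopic w ->
  2 <= num_retractable w.
Proof.
move=> hc hne hn.
apply: (@main_aux T e e_irr (size w)) => //.
by exists (size w); apply/eqP.
Qed.
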